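(* Let $\mathcal A,\mathcal B,\mathcal C,\mathcal D$ be collections and $\alpha$ an ordinal. Suppose that for each $\xi<\alpha$ there are functions $\overleftarrow T_{\mathrm I,\xi}:\mathcal B\to\mathcal A$ and $\overrightarrow T_{\mathrm{II},\xi}:(\bigcup\mathcal A)\times\mathcal B\to\bigcup\mathcal B$ such that (Tr1) if $x\in\overleftarrow T_{\mathrm I,\xi}(B)$ then $\overrightarrow T_{\mathrm{II},\xi}(x,B)\in B$; and (Tr2) if $x_\xi\in\overleftarrow T_{\mathrm I,\xi}(B_\xi)$ for all $\xi<\alpha$ and $\{x_\xi:\xi<\alpha\}\in\mathcal C$, then $\{\overrightarrow T_{\mathrm{II},\xi}(x_\xi,B_\xi):\xi<\alpha\}\in\mathcal D$. Then $G^\alpha_1(\mathcal A,\mathcal C)\le_{\mathrm{II}}G^\alpha_1(\mathcal B,\mathcal D)$.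
   Context: In the game $G^\alpha_1(\mathcal E,\mathcal F)$, at each stage $\xi<\alpha$ One plays $E_\xi\in\mathcal E$ and Two picks $x_\xi\in E_\xi$; Two wins iff $\{x_\xi:\xi<\alpha\}\in\mathcal F$, otherwise One wins. A strategy for One is a function $\sigma:(\bigcup\mathcal E)^{<\alpha}\to\mathcal E$ (from the sequence of Two's previous moves); it is predetermined if it depends only on the stage $\xi$. A strategy for Two is a function $\tau:\mathcal E^{<\alpha}\to\bigcup\mathcal E$ choosing an element of One's latest move; it is Markov if it is a function $\mathcal E\times\alpha\to\bigcup\mathcal E$ of One's latest move and the stage. A strategy is winning if its player wins every play following it. $G\le_{\mathrm{II}}H$ means: (1) if Two has a winning Markov strategy in $G$ then Two has one in $H$; (2) if Two has a winning strategy in $G$ then Two has one in $H$; (3) if One has no winning strategy in $G$ then One has none in $H$; (4) if One has no winning predetermined strategy in $G$ then One has none in $H$. *)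

(* Defs.v *)
From Stdlib Require Import Classical.



Definition set (T : Type) := T -> Prop.

(* The ordinal alpha is represented by a type I of stages, well-ordered by lt:
   the stages xi < alpha are the elements of I (every well-order is
   order-isomorphic to an ordinal). *)
Definition well_order {I : Type} (lt : I -> I -> Prop) : Prop :=
  well_founded lt /\
  (forall a b c, lt a b -> lt b c -> lt a c) /\
  (forall a b, lt a b \/ a = b \/ lt b a).

Definition below (I : Type) (lt : I -> I -> Prop) (xi : I) := {eta : I | lt eta xi}.

Arguments below {I} lt xi.

Definition restr (I : Type) (lt : I -> I -> Prop) (T : Type) (f : I -> T) (xi : I)
  : below lt xi -> T := fun eta => f (proj1_sig eta).

Arguments restr {I} lt {T} f xi _.

Definition range {I T : Type} (f : I -> T) : set T := fun y => exists xi, f xi = y.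

Section Game.
Variables (I : Type) (lt : I -> I -> Prop) (X : Type).
Variables (E F : set (set X)).

(* Strategies for One: from the sequence of Two's previous moves, to E. *)
Definition one_strategy (sigma : forall xi : I, (below lt xi -> X) -> set X) : Prop :=
  forall xi h, E (sigma xi h).

Definition follows_one (sigma : forall xi : I, (below lt xi -> X) -> set X)
  (x : I -> X) : Prop :=
  forall xi, sigma xi (restr lt x xi) (x xi).

Definition one_has_winning_strategy : Prop :=
  exists sigma, one_strategy sigma /\
    forall x, follows_one sigma x -> ~ F (range x).

Definition one_has_winning_predetermined_strategy : Prop :=
  exists sigma : I -> set X, (forall xi, E (sigma xi)) /\
    forall x : I -> X, (forall xi, sigma xi (x xi)) -> ~ F (range x).

(* Strategies for Two: from One's previous moves and One's latest move,
   choose an element of the latest move. *)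
Definition two_strategy (tau : forall xi : I, (below lt xi -> set X) -> set X -> X) : Prop :=
  forall xi h Ex, E Ex -> Ex (tau xi h Ex).

Definition two_has_winning_strategy : Prop :=
  exists tau, two_strategy tau /\
    forall e : I -> set X, (forall xi, E (e xi)) ->
      F (range (fun xi => tau xi (restr lt e xi) (e xi))).

Definition two_has_winning_markov_strategy : Prop :=
  exists tau : set X -> I -> X, (forall Ex xi, E Ex -> Ex (tau Ex xi)) /\
    forall e : I -> set X, (forall xi, E (e xi)) ->
      F (range (fun xi => tau (e xi) xi)).
End Game.
Arguments one_strategy {I} lt {X} E sigma.
Arguments follows_one {I} lt {X} sigma x.
Arguments one_has_winning_strategy {I} lt {X} E F.
Arguments one_has_winning_predetermined_strategy {I X} E F.
Arguments two_strategy {I} lt {X} E tau.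
Arguments two_has_winning_strategy {I} lt {X} E F.
Arguments two_has_winning_markov_strategy {I X} E F.

Definition le_II {I : Type} (lt : I -> I -> Prop) {X Y : Type}
  (E F : set (set X)) (E' F' : set (set Y)) : Prop :=
  (two_has_winning_markov_strategy (I:=I) E F -> two_has_winning_markov_strategy (I:=I) E' F') /\
  (two_has_winning_strategy lt E F -> two_has_winning_strategy lt E' F') /\
  (~ one_has_winning_strategy lt E F -> ~ one_has_winning_strategy lt E' F') /\
  (~ one_has_winning_predetermined_strategy (I:=I) E F ->
     ~ one_has_winning_predetermined_strategy (I:=I) E' F').

(* Main.v *)
Require Import Defs.
From Stdlib Require Import FunctionalExtensionality.

Theorem mainTheorem7
  (X Y I : Type) (lt : I -> I -> Prop) (Hwo : well_order lt)
  (A C : set (set X)) (B D : set (set Y))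
  (TI : I -> set Y -> set X) (TII : I -> X -> set Y -> Y)
  (HTI : forall xi Bs, B Bs -> A (TI xi Bs))
  (HTII : forall xi x Bs, (exists a, A a /\ a x) -> B Bs ->
            exists b, B b /\ b (TII xi x Bs))
  (Tr1 : forall xi x Bs, B Bs -> TI xi Bs x -> Bs (TII xi x Bs))
  (Tr2 : forall (x : I -> X) (Bs : I -> set Y),
           (forall xi, B (Bs xi)) ->
           (forall xi, TI xi (Bs xi) (x xi)) ->
           C (range x) ->
           D (range (fun xi => TII xi (x xi) (Bs xi)))) :
  le_II lt A C B D.
Proof.
  destruct Hwo as [Hwf [Htr _]].
  split; [|split; [|split]].
  - intros [tau [Ht Hw]].
    exists (fun Bs xi => TII xi (tau (TI xi Bs) xi) Bs). split.
    + intros Ex xi HE. apply Tr1; auto. apply Ht. apply HTI; auto.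
    + intros e He.
      apply (Tr2 (fun xi => tau (TI xi (e xi)) xi) e He).
      * intros xi. apply Ht; auto.
      * apply (Hw (fun xi => TI xi (e xi))). intros; auto.
  - intros [tau [Ht Hw]].
    exists (fun xi (h : below lt xi -> set Y) Bs =>
      TII xi (tau xi (fun eta => TI (proj1_sig eta) (h eta)) (TI xi Bs)) Bs).
    split.
    + intros xi h Ex HE. apply Tr1; auto. apply Ht. apply HTI; auto.
    + intros e He.
      apply (Tr2 (fun xi => tau xi (restr lt (fun eta => TI eta (e eta)) xi) (TI xi (e xi))) e He).
      * intros xi. apply Ht; auto.
      * apply (Hw (fun xi => TI xi (e xi))). intros; auto.
  - intros HnA [sig' [Hs Hw]]. apply HnA.
    set (P := fun xi : I => (below lt xi -> X) -> set Y).
    set (F := fun (xi : I) (rec : forall eta, lt eta xi -> P eta) =>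
      (fun h : below lt xi -> X =>
        sig' xi (fun eta : below lt xi =>
          TII (proj1_sig eta) (h eta)
            (rec (proj1_sig eta) (proj2_sig eta)
               (fun zeta : below lt (proj1_sig eta) =>
                  h (exist _ (proj1_sig zeta)
                       (Htr _ _ _ (proj2_sig zeta) (proj2_sig eta))))))) : P xi).
    set (G := Fix Hwf P F).
    assert (HG : forall xi h, G xi h = F xi (fun eta _ => G eta) h).
    { intros xi h. unfold G. rewrite Fix_eq; [reflexivity|].
      intros x0 f g Hfg.
      assert (f = g) as ->.
      { apply functional_extensionality_dep; intro y.
        apply functional_extensionality_dep; intro p. apply Hfg. }
      reflexivity. }
    exists (fun xi h => TI xi (G xi h)). split.
    + intros xi h. apply HTI. rewrite HG. apply Hs.
    + intros x Hx HC.
      assert (HB : forall xi, B (G xi (restr lt x xi))).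
      { intros xi. rewrite HG. apply Hs. }
      apply (Hw (fun xi => TII xi (x xi) (G xi (restr lt x xi)))).
      * intros xi. simpl.
        pose proof (Tr1 xi (x xi) _ (HB xi) (Hx xi)) as H.
        revert H. generalize (TII xi (x xi) (G xi (restr lt x xi))) as yv. intros yv H. rewrite HG in H. exact H.
      * apply Tr2; auto.
  - intros HnA [sig' [Hs Hw]]. apply HnA.
    exists (fun xi => TI xi (sig' xi)). split.
    + intros; auto.
    + intros x Hx HC. apply (Hw (fun xi => TII xi (x xi) (sig' xi))).
      * intros xi. apply Tr1; auto.
      * apply Tr2; auto.
Qed.
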